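(* Let $\mathrm{M}$ be a loopless matroid on a finite set $E$ with lattice of flats $\mathcal{L}$, and let $\vartriangleleft$ be a total order on $E$. For every $F\in\mathcal{L}$: (i) $C_\vartriangleleft(F,\hat1)=\{F\vee H: H\in C_\vartriangleleft(\hat0,\hat1)\}$; (ii) $C_\vartriangleleft(\hat0,\hat1)\cap[\hat0,F]\subseteq C_\vartriangleleft(\hat0,F)$.
   Context: Flats are ordered by inclusion, $\hat0=\varnothing$, $\hat1=E$, $F\vee H=\operatorname{cl}_{\mathrm{M}}(F\cup H)$. For flats $F\leqslant G$, writing $G\setminus F=\{e_1\vartriangleleft e_2\vartriangleleft\dots\vartriangleleft e_k\}$ and $F_i=\operatorname{cl}_{\mathrm{M}}(F\cup\{e_1,\dots,e_i\})$, the $\vartriangleleft$-chain from $F$ to $G$ is the set of flats $C_\vartriangleleft(F,G)=\{F,F_1,F_2,\dots,F_k=G\}$. *)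

(* Defs.v *)
From mathcomp Require Import all_boot.
Set Implicit Arguments. Unset Strict Implicit. Unset Printing Implicit Defensive.

Record matroid (T : finType) := Matroid {
  indep : pred {set T};
  indep0 : indep set0;
  indep_sub : forall A B : {set T}, A \subset B -> indep B -> indep A;
  indep_aug : forall A B : {set T}, indep A -> indep B -> #|A| < #|B| ->
    exists2 x, x \in B :\: A & indep (x |: A)
}.

Section MatroidDefs.
Variables (T : finType) (M : matroid T).

Definition mrank (A : {set T}) : nat :=
  \max_(I : {set T} | indep M I && (I \subset A)) #|I|.

Definition mcl (A : {set T}) : {set T} :=
  [set x | mrank (x |: A) == mrank A].

Definition flat (A : {set T}) : bool := mcl A == A.

Definition loopless : Prop := forall e : T, indep M [set e].

Definition total_order (le : rel T) : Prop :=
  [/\ reflexive le, antisymmetric le, transitive le & total le].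

(* The le-chain from F to G: with G \ F = {e_1 < ... < e_k} and
   F_i = cl(F u {e_1..e_i}), C(F,G) = {F, F_1, ..., F_k}. *)
Definition lchain (le : rel T) (F G : {set T}) : {set {set T}} :=
  let s := sort le (enum (G :\: F)) in
  F |: [set mcl (F :|: [set x in take i.+1 s]) | i : 'I_(size s)].

End MatroidDefs.

(* Main.v *)
Require Import Defs.
From mathcomp Require Import all_boot zify.
Set Implicit Arguments. Unset Strict Implicit. Unset Printing Implicit Defensive.

Section Mat.
Variables (T : finType) (M : matroid T).
Local Notation r := (mrank M).

Lemma rank_le (I A : {set T}) : indep M I -> I \subset A -> #|I| <= r A.
Proof. move=> hI hA; rewrite /mrank; apply: (@leq_bigmax_cond _ (fun J : {set T} => indep M J && (J \subset A)) (fun J => #|J|) I).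
by rewrite hI hA. Qed.

Lemma rank_wit (A : {set T}) : exists I, [/\ indep M I, I \subset A & #|I| = r A].
Proof.
have h : 0 < #|[pred I : {set T} | indep M I && (I \subset A)]|.
  by apply/card_gt0P; exists set0; rewrite inE indep0 sub0set.
case: (eq_bigmax_cond (fun I : {set T} => #|I|) h) => I; rewrite inE => /andP [h1 h2] e.
by exists I; split => //; rewrite /mrank e.
Qed.

Lemma rank_mono (A B : {set T}) : A \subset B -> r A <= r B.
Proof.
move=> AB; case: (rank_wit A) => I [h1 h2 <-]; apply: rank_le => //.
exact: subset_trans AB.
Qed.

Lemma extend (B : {set T}) n : forall I : {set T}, r B - #|I| = n -> indep M I -> I \subset B ->
  exists J, [/\ indep M J, I \subset J, J \subset B & #|J| = r B].
Proof.
elim: n => [|n IH] I hn hI hIB.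
  exists I; split => //; have := rank_le hI hIB; lia.
case: (rank_wit B) => J0 [h1 h2 h3].
have [x] : exists2 x, x \in J0 :\: I & indep M (x |: I).
  apply: indep_aug => //; lia.
rewrite inE => /andP [xI xJ] hxI.
have [||J [j1 j2 j3 j4]] := IH (x |: I) _ hxI.
- by rewrite cardsU1 xI; lia.
- by rewrite subUset sub1set (subsetP h2).
exists J; split => //; apply: subset_trans j2; exact: subsetUr.
Qed.

Lemma rankK (Y X Z : {set T}) : r (Y :|: X) = r Y -> r (Y :|: X :|: Z) = r (Y :|: Z).
Proof.
move=> h; apply/eqP; rewrite eqn_leq.
rewrite [X in _ && X]rank_mono ?andbT; last by apply/subsetP => y; rewrite !inE; case: (y \in Y); case: (y \in X).
rewrite leqNgt; apply/negP => lt.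
case: (rank_wit Y) => I0 [a1 a2 a3].
have [I1 [b1 b2 b3 b4]] := extend (erefl _) a1 (subset_trans a2 (subsetUl Y Z)).
case: (rank_wit (Y :|: X :|: Z)) => J [c1 c2 c3].
have [x] : exists2 x, x \in J :\: I1 & indep M (x |: I1).
  apply: indep_aug => //; lia.
rewrite inE => /andP [xI xJ] hxI.
have xYXZ := subsetP c2 x xJ.
case xYZ: (x \in Y :|: Z).
  have := @rank_le _ (Y :|: Z) hxI; rewrite subUset sub1set xYZ b3 => /(_ isT).
  by rewrite cardsU1 xI b4 add1n ltnn.
have xX : x \in X.
  move: xYXZ xYZ; rewrite !inE.
  by move=> /orP[/orP[q|q]|q]; rewrite ?q ?orbT.
have hx0 : indep M (x |: I0) by apply: indep_sub hxI; apply: setUS.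
have := @rank_le _ (Y :|: X) hx0; rewrite subUset sub1set !inE xX orbT /= => /(_ (subset_trans a2 (subsetUl _ _))).
by rewrite cardsU1 h (negbTE (contra (subsetP b2 x) xI)) a3 add1n ltnn.
Qed.

Lemma sub_cl (A : {set T}) : A \subset mcl M A.
Proof. by apply/subsetP => x xA; rewrite inE (setUidPr _) // sub1set. Qed.

Lemma rank_cl (B : {set T}) : r (B :|: mcl M B) = r B.
Proof.
suff: forall n (S : {set T}), #|S| = n -> S \subset mcl M B -> r (B :|: S) = r B by apply.
elim=> [|n IH] S hS hsub.
  by move/eqP: hS; rewrite cards_eq0 => /eqP ->; rewrite setU0.
have [x xS] : exists x, x \in S by apply/set0Pn; rewrite -card_gt0 hS.
have e : S = x |: (S :\ x) by rewrite setD1K.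
have hx : r (B :|: [set x]) = r B by move: (subsetP hsub x xS); rewrite inE setUC => /eqP.
have := rankK (S :\ x) hx.
rewrite IH; last first.
  - by apply: subset_trans hsub; apply: subsetDl.
  - by move: hS; rewrite {1}e cardsU1 !inE eqxx /=; lia.
by move=> <-; congr r; rewrite {1}e; apply/setP => y; rewrite !inE; case: (y \in B); case: (y == x).
Qed.

Lemma clU (A B : {set T}) : mcl M (A :|: mcl M B) = mcl M (A :|: B).
Proof.
have h Z : r (mcl M B :|: Z) = r (B :|: Z).
  by rewrite -(rankK Z (rank_cl B)) (setUidPr (sub_cl B)).
apply/setP => x; rewrite !inE.
have -> : x |: (A :|: mcl M B) = mcl M B :|: (x |: A).
  by move: (mcl M B) => C; apply/setP => y; rewrite !inE; case: (y == x); case: (y \in A); case: (y \in C).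
have -> : A :|: mcl M B = mcl M B :|: A by rewrite setUC.
rewrite !h; congr (r _ == r _); apply/setP => y; rewrite !inE;
  by case: (y == x); case: (y \in A); case: (y \in B).
Qed.
End Mat.
Lemma filter_take (X : eqType) (p : pred X) (s : seq X) n :
  filter p (take n s) = take (count p (take n s)) (filter p s).
Proof.
by rewrite -{3}(cat_take_drop n s) filter_cat take_size_cat // size_filter.
Qed.

Lemma count_take_le (X : eqType) (p : pred X) (s : seq X) n :
  count p (take n s) <= count p s.
Proof. by rewrite -{2}(cat_take_drop n s) count_cat leq_addr. Qed.

Lemma count_ivt (X : eqType) (p : pred X) (s : seq X) m :
  m <= count p s -> exists2 n, n <= size s & count p (take n s) = m.
Proof.
elim: s m => [|a s IH] m /=.
  by rewrite leqn0 => /eqP ->; exists 0.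
case: m => [|m] hm; first by exists 0.
case pa: (p a); move: hm; rewrite pa /= => hm.
  have [n hn e] := IH m hm; exists n.+1 => //=; by rewrite pa e.
have [n hn e] := IH m.+1 hm; exists n.+1 => //=; by rewrite pa e.
Qed.

Section Sorting.
Variables (T : finType) (le : rel T).
Hypothesis (tr : transitive le) (an : antisymmetric le) (to : total le).

Lemma sort_sub (A B : {set T}) : A \subset B ->
  sort le (enum A) = filter [pred x | x \in A] (sort le (enum B)).
Proof.
move=> AB; apply: (sorted_eq tr an).
- exact: sort_sorted.
- apply: sorted_filter => //; exact: sort_sorted.
apply: uniq_perm.
- by rewrite sort_uniq enum_uniq.
- by rewrite filter_uniq // sort_uniq enum_uniq.
move=> x; rewrite mem_filter !mem_sort !mem_enum /=.
by case xA: (x \in A) => //=; rewrite (subsetP AB).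
Qed.
End Sorting.

Theorem lemma3p4 (T : finType) (M : matroid T) (le : rel T) :
  loopless M -> total_order le ->
  forall F : {set T}, flat M F ->
    lchain M le F setT = [set mcl M (F :|: H) | H in lchain M le set0 setT]
    /\ [set H in lchain M le set0 setT | H \subset F] \subset lchain M le set0 F.
Proof.
move=> _ [rf an tr to] F /eqP flF.
rewrite /lchain /=.
set s := sort le (enum (setT :\: set0)).
have hu := sort_sub tr an to (setDS setT (sub0set F)).
have hF := sort_sub tr an to (setSD set0 (subsetT F)).
rewrite -/s in hu hF.
set u := sort le (enum ([set: T] :\: F)) in hu *.
set t := sort le (enum (F :\: set0)) in hF *.
set pF := [pred x in [set: T] :\: F] in hu.
have hset n : F :|: [set x in take n s] = F :|: [set x in take (count pF (take n s)) u].
  rewrite hu -filter_take; apply/setP => y; rewrite !inE mem_filter !inE /=.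
  by case: (y \in F).
have szu : size u = count pF s by rewrite hu size_filter.
split.
  apply/setP => H; apply/idP/idP.
    rewrite in_setU1 => /orP [/eqP -> | /imsetP [i _ ->]].
      by apply/imsetP; exists set0; rewrite ?setU11 ?setU0 ?flF.
    have [n hn e] : exists2 n, n <= size s & count pF (take n s) = i.+1.
      by apply: count_ivt; rewrite -szu.
    case: n hn e => [|n] hn e; first by move: e; rewrite take0.
    apply/imsetP; exists (mcl M (set0 :|: [set x in take n.+1 s])).
      by apply/setU1P; right; apply/imsetP; exists (Ordinal hn).
    by rewrite clU set0U hset e.
  move=> /imsetP [H' hH' ->]; move: hH'.
  rewrite in_setU1 => /orP [/eqP -> | /imsetP [i _ ->]].
    by rewrite setU0 flF setU11.
  rewrite clU set0U hset.
  have hc := @count_take_le _ pF s i.+1; rewrite -szu in hc.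
  move: hc; case: (count pF (take i.+1 s)) => [|m] hm.
    by rewrite take0 setU0 flF setU11.
  by apply/setU1P; right; apply/imsetP; exists (Ordinal hm).
apply/subsetP => H; rewrite inE => /andP [].
rewrite in_setU1 => /orP [/eqP -> | /imsetP [i _ ->]] hsub; first by rewrite setU11.
have hall : all [pred x in F :\: set0] (take i.+1 s).
  apply/allP => x xs; rewrite /= setD0; apply: (subsetP hsub); apply: (subsetP (sub_cl M _)).
  by rewrite !inE.
have hsz : size (take i.+1 s) = i.+1 by rewrite size_takel // ltn_ord.
have e : take i.+1 s = take i.+1 t.
  by rewrite hF -{1}(all_filterP hall) filter_take -size_filter (all_filterP hall) hsz.
have hi : i < size t.
  rewrite hF size_filter; have := @count_take_le _ [pred x in F :\: set0] s i.+1.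
  by rewrite -size_filter (all_filterP hall) hsz.
apply/setU1P; right; apply/imsetP; exists (Ordinal hi) => //=.
by congr (mcl M (_ :|: _)); apply/setP => y; rewrite !inE -e.
Qed.
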